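(* Let $\lambda=\inf\{u : |\mathrm{GHZ}\rangle^{\otimes\lfloor un\rfloor}\stackrel{\textrm{SLOCC}}{\longrightarrow}|\Phi^3\rangle^{\otimes n}\text{ for all sufficiently large } n\}$. Then $\lambda=\omega$, the exponent of matrix multiplication, i.e. the smallest real number $\omega$ such that two $N\times N$ matrices can be multiplied using $O(N^{\omega})$ multiplications, each being a product of a linear function of the entries of the first matrix and a linear function of the entries of the second matrix.
   Context: Three parties $A,B,C$. $|\mathrm{GHZ}\rangle=\frac{1}{\sqrt2}(|000\rangle+|111\rangle)$ with one qubit held by each party. Let $|\Phi\rangle=|00\rangle+|11\rangle$. $|\Phi^3\rangle=|\Phi\rangle_{AB}|\Phi\rangle_{AC}|\Phi\rangle_{BC}$ is the state in which each pair of parties shares one EPR state (each party holds two qubits). Tensor powers are taken with each party holding its own parts of all copies. $|\psi\rangle\stackrel{\textrm{SLOCC}}{\longrightarrow}|\phi\rangle$ means $|\psi\rangle$ can be transformed into $|\phi\rangle$ with nonzero probability by local operations and classical communication; equivalently, there exist linear operators $A,B,C$ on the respective parties' spaces with $(A\otimes B\otimes C)|\psi\rangle=|\phi\rangle$ up to a nonzero scalar. *)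

(* Defs.v *)
From HB Require Import structures.
From mathcomp Require Import all_boot all_order all_algebra.
From mathcomp Require Import all_classical all_reals all_analysis.
From mathcomp Require Import complex.
Set Implicit Arguments. Unset Strict Implicit. Unset Printing Implicit Defensive.
Import Order.TTheory GRing.Theory Num.Theory.
Local Open Scope ring_scope.
Local Open Scope classical_set_scope.

(* A tripartite (unnormalised) state on local bases X, Y, Z: its coefficients. *)
Definition tensor3 (K : Type) (X Y Z : finType) := X -> Y -> Z -> K.

Definition slocc (K : fieldType) (X Y Z X' Y' Z' : finType)
  (psi : tensor3 K X Y Z) (phi : tensor3 K X' Y' Z') : Prop :=
  exists (A : X' -> X -> K) (B : Y' -> Y -> K) (D : Z' -> Z -> K) (c : K),
    c != 0 /\
    forall x' y' z',
      \sum_(x : X) \sum_(y : Y) \sum_(z : Z) A x' x * B y' y * D z' z * psi x y z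
      = c * phi x' y' z'.

(* m-th tensor power, each party holding its own parts of all m copies. *)
Definition tpow (K : comNzRingType) (X Y Z : finType) (T : tensor3 K X Y Z) (m : nat)
  : tensor3 K {ffun 'I_m -> X} {ffun 'I_m -> Y} {ffun 'I_m -> Z} :=
  fun x y z => \prod_(i < m) T (x i) (y i) (z i).

Arguments tpow {K X Y Z} T m.

Definition GHZ (R : realType) : tensor3 (complex R) bool bool bool :=
  fun a b c => (sqrtC 2)^-1 * ((a == b) && (b == c))%:R.

Definition EPR (K : nzRingType) (a b : bool) : K := (a == b)%:R.

(* |Phi^3> = |Phi>_AB |Phi>_AC |Phi>_BC.  A holds (its AB qubit, its AC qubit),
   B holds (its AB qubit, its BC qubit), C holds (its AC qubit, its BC qubit). *)
Definition Phi3 (K : nzRingType) : tensor3 K (bool * bool)%type (bool * bool)%type (bool * bool)%type :=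
  fun a b c => @EPR K a.1 b.1 * @EPR K a.2 c.1 * @EPR K b.2 c.2.

Definition lambda_set (R : realType) : set R :=
  [set u | 0 <= u /\ exists n0 : nat, forall n : nat, (n0 <= n)%N ->
     slocc (tpow (GHZ R) (Num.truncn (u * n%:R))) (tpow (Phi3 (complex R)) n)].

Definition lambda_GHZ (R : realType) : R := inf (@lambda_set R).

Definition bilinear_mm_alg (K : comNzRingType) (N r : nat) : Prop :=
  exists (U V W : 'I_r -> 'M[K]_N),
    forall (A B : 'M[K]_N) (i j : 'I_N),
      (A *m B) i j =
      \sum_(k < r) W k i j *
         ((\sum_(a < N) \sum_(b < N) U k a b * A a b) *
          (\sum_(a < N) \sum_(b < N) V k a b * B a b)).

Definition omega_set (R : realType) : set R :=
  [set tau | exists (c : R) (N0 : nat), forall N : nat, (N0 <= N)%N ->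
     exists r : nat, bilinear_mm_alg (complex R) N r /\ r%:R <= c * (N%:R `^ tau)].

Definition omega_mm (R : realType) : R := inf (@omega_set R).

(* Main.v *)
Require Import Defs.
From HB Require Import structures.
From mathcomp Require Import all_boot all_order all_algebra.
From mathcomp Require Import all_classical all_reals all_analysis.
From mathcomp Require Import complex ring lra.
Set Implicit Arguments. Unset Strict Implicit. Unset Printing Implicit Defensive.
Import Order.TTheory GRing.Theory Num.Theory.
Local Open Scope ring_scope.
Local Open Scope classical_set_scope.

Section Alg.
Variable K : fieldType.

Lemma sum_only (I : finType) (j : I) (G : I -> K) :
  (forall i, i != j -> G i = 0) -> \sum_i G i = G j.
Proof.
move=> H; rewrite (bigD1 j) //= big1 ?addr0 // => i; exact: H.
Qed.

Lemma prod_natb (I : finType) (P : pred I) :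
  \prod_(i : I) ((P i)%:R : K) = ([forall i, P i])%:R.
Proof.
case: (boolP [forall i, P i]) => [/forallP H|/forallPn [i Hi]].
  by rewrite big1 // => i _; rewrite H.
by rewrite (bigD1 i) //= (negbTE Hi) mul0r.
Qed.

Definition dec (X Y Z : finType) (T : tensor3 K X Y Z) (I : finType) :=
  exists (al : I -> X -> K) (be : I -> Y -> K) (ga : I -> Z -> K),
    forall x y z, T x y z = \sum_k al k x * be k y * ga k z.

Lemma dec_pull (X Y Z X' Y' Z' : finType) (T : tensor3 K X Y Z)
  (T' : tensor3 K X' Y' Z') (I : finType)
  (f : X -> X') (g : Y -> Y') (h : Z -> Z') :
  (forall x y z, T x y z = T' (f x) (g y) (h z)) -> dec T' I -> dec T I.
Proof.
move=> HT [al [be [ga H]]].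
exists (fun k x => al k (f x)), (fun k y => be k (g y)), (fun k z => ga k (h z)).
by move=> x y z; rewrite HT H.
Qed.

Lemma dec_mono (X Y Z : finType) (T : tensor3 K X Y Z) (I J : finType) :
  (#|I| <= #|J|)%N -> dec T I -> dec T J.
Proof.
move=> HIJ [al [be [ga H]]].
pose f (i : I) : J := enum_val (widen_ord HIJ (enum_rank i)).
have finj : injective f.
  move=> i1 i2 /enum_val_inj /(congr1 val) /= /val_inj; exact: enum_rank_inj.
pose pk j := [pick i | f i == j].
exists (fun j x => if pk j is Some i then al i x else 0),
       (fun j y => if pk j is Some i then be i y else 0),
       (fun j z => if pk j is Some i then ga i z else 0).
move=> x y z; rewrite H (partition_big f predT) //=; apply: eq_bigr => j _.
rewrite /pk; case: pickP => [i0 /eqP Hi0 | H0].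
  rewrite (big_pred1 i0) // => i /=; apply/eqP/eqP => [Hi|->//].
  by apply: finj; rewrite Hi Hi0.
by rewrite big_pred0 ?mul0r // => i /=; exact: H0 i.
Qed.

Definition MM (N : nat) : tensor3 K ('I_N * 'I_N)%type ('I_N * 'I_N)%type ('I_N * 'I_N)%type :=
  fun x y z => ((x.1 == z.1) && (x.2 == y.1) && (y.2 == z.2))%:R.

Arguments MM N : clear implicits.

Lemma sum2_delta N (F : 'I_N -> 'I_N -> K) a b :
  \sum_a' \sum_b' F a' b' * ((a' == a) && (b' == b))%:R = F a b.
Proof.
rewrite (@sum_only _ a); last first.
  by move=> a' Ha; rewrite big1 // => b' _; rewrite (negbTE Ha) mulr0.
rewrite (@sum_only _ b); last by move=> b' Hb; rewrite (negbTE Hb) andbF mulr0.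
by rewrite !eqxx mulr1.
Qed.

Lemma sum2_delta_mx N (F : 'I_N -> 'I_N -> K) a b :
  \sum_a' \sum_b' F a' b' * delta_mx a b a' b' = F a b.
Proof.
rewrite -(sum2_delta F a b); apply: eq_bigr => a' _; apply: eq_bigr => b' _.
by rewrite mxE.
Qed.

Lemma alg_dec N r : bilinear_mm_alg K N r <-> dec (MM N) 'I_r.
Proof.
split.
  case=> U [V [W Halg]].
  exists (fun k x => U k x.1 x.2), (fun k y => V k y.1 y.2), (fun k z => W k z.1 z.2).
  move=> [a b] [c d] [i j] /=.
  have := Halg (delta_mx a b) (delta_mx c d) i j.
  rewrite !mxE.
  under [in X in X = _ -> _]eq_bigr do rewrite !mxE.
  under [in X in _ = X -> _]eq_bigr do rewrite !sum2_delta_mx.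
  rewrite (@sum_only _ b); last first.
    by move=> l Hl; rewrite (negbTE Hl) andbF mul0r.
  rewrite !eqxx andbT => E.
  rewrite (eq_bigr (fun k => W k i j * (U k a b * V k c d))); last first.
    by move=> k _; rewrite mulrC.
  rewrite -E /MM /= [i == a]eq_sym [j == d]eq_sym.
  by case: (a == i); case: (b == c); case: (d == j); rewrite /= ?mulr1 ?mulr0 ?mul0r ?mul1r.
case=> al [be [ga H]].
exists (fun k => \matrix_(a, b) al k (a, b)), (fun k => \matrix_(a, b) be k (a, b)),
  (fun k => \matrix_(a, b) ga k (a, b)).
move=> A B i j.
transitivity (\sum_a \sum_b \sum_c \sum_d A a b * B c d * MM N (a, b) (c, d) (i, j)).
  rewrite mxE [RHS](@sum_only _ i); last first.
    move=> a Ha /=; rewrite big1 // => b _; rewrite big1 // => c _; rewrite big1 // => d _.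
    by rewrite /MM /= (negbTE Ha) /= mulr0.
  apply: eq_bigr => b _; rewrite [RHS](@sum_only _ b); last first.
    move=> c Hc /=; rewrite big1 // => d _.
    by rewrite /MM /= [b == c]eq_sym (negbTE Hc) andbF /= mulr0.
  rewrite (@sum_only _ j); last first.
    by move=> d Hd; rewrite /MM /= (negbTE Hd) andbF /= mulr0.
  by rewrite /MM /= !eqxx /= mulr1.
symmetry.
transitivity (\sum_k \sum_a \sum_b \sum_c \sum_d ga k (i, j) * (al k (a, b) * A a b) * (be k (c, d) * B c d)).
  apply: eq_bigr => k _.
  rewrite mulr_suml mulr_sumr; apply: eq_bigr => a _.
  rewrite mulr_suml mulr_sumr; apply: eq_bigr => b _.
  rewrite mulr_sumr mulr_sumr; apply: eq_bigr => c _.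
  rewrite mulr_sumr mulr_sumr; apply: eq_bigr => d _.
  by rewrite !mxE; ring.
rewrite exchange_big; apply: eq_bigr => a _.
rewrite exchange_big; apply: eq_bigr => b _.
rewrite exchange_big; apply: eq_bigr => c _.
rewrite exchange_big; apply: eq_bigr => d _.
rewrite H mulr_sumr; apply: eq_bigr => k _; ring.
Qed.


End Alg.
Arguments MM {K} N.
Arguments dec {K X Y Z} T I.
Section Quant.
Variable R : realType.
Local Notation C := (complex R).

Let s : C := (sqrtC 2)^-1.

Lemma s_neq0 m : s ^+ m != 0.
Proof. by rewrite expf_neq0 // invr_eq0 sqrtC_eq0 pnatr_eq0. Qed.

Lemma tpow_GHZ m x y z :
  tpow (GHZ R) m x y z = s ^+ m * ((x == y) && (y == z))%:R.
Proof.
rewrite /tpow /GHZ big_split /= prodr_const card_ord prod_natb; congr (_ * _%:R); congr (nat_of_bool _).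
apply/idP/idP => [/forallP H|/andP [/eqP-> /eqP->]]; last by apply/forallP => i; rewrite !eqxx.
by apply/andP; split; apply/eqP/ffunP => i; case/andP: (H i) => /eqP h1 /eqP h2.
Qed.

Lemma slocc_key m (X' Y' Z' : finType) (A : X' -> {ffun 'I_m -> bool} -> C)
  (B : Y' -> {ffun 'I_m -> bool} -> C) (D : Z' -> {ffun 'I_m -> bool} -> C) x' y' z' :
  \sum_x \sum_y \sum_z A x' x * B y' y * D z' z * tpow (GHZ R) m x y z
  = s ^+ m * \sum_x A x' x * B y' x * D z' x.
Proof.
rewrite mulr_sumr; apply: eq_bigr => x _.
rewrite (@sum_only _ _ x); last first.
  move=> y Hy /=; rewrite big1 // => z _.
  by rewrite tpow_GHZ eq_sym (negbTE Hy) /= !mulr0.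
rewrite (@sum_only _ _ x); last first.
  move=> z Hz /=.
  by rewrite tpow_GHZ eq_sym (negbTE Hz) andbF /= !mulr0.
by rewrite tpow_GHZ !eqxx /= mulr1 mulrC.
Qed.

Lemma slocc_dec m (X' Y' Z' : finType) (T : tensor3 C X' Y' Z') :
  slocc (tpow (GHZ R) m) T <-> dec T {ffun 'I_m -> bool}.
Proof.
split.
  case=> A [B [D [c [c0 H]]]].
  exists (fun k x' => c^-1 * s ^+ m * A x' k), (fun k y' => B y' k), (fun k z' => D z' k).
  move=> x y z; apply: (mulfI c0); rewrite -H slocc_key mulr_sumr mulr_sumr.
  by apply: eq_bigr => k _; rewrite !mulrA mulfV // mul1r.
case=> al [be [ga H]].
exists (fun x' k => al k x'), (fun y' k => be k y'), (fun z' k => ga k z'), (s ^+ m).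
split; first exact: s_neq0.
by move=> x' y' z'; rewrite (slocc_key (fun x' k => al k x') (fun y' k => be k y') (fun z' k => ga k z')) H.
Qed.

End Quant.
Section Phi.
Variable K : fieldType.
Variable n : nat.
Local Notation F := {ffun 'I_n -> bool}.
Local Notation FF := {ffun 'I_n -> (bool * bool)%type}.

Definition fstf (a : FF) : F := [ffun i => (a i).1].
Definition sndf (a : FF) : F := [ffun i => (a i).2].
Definition zipf (u v : F) : FF := [ffun i => (u i, v i)].

Lemma fstf_zip u v : fstf (zipf u v) = u.
Proof. by apply/ffunP => i; rewrite !ffunE. Qed.
Lemma sndf_zip u v : sndf (zipf u v) = v.
Proof. by apply/ffunP => i; rewrite !ffunE. Qed.

Lemma tpow_Phi3 (a b c : FF) :
  tpow (Phi3 K) n a b c =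
  ((fstf a == fstf b) && (sndf a == fstf c) && (sndf b == sndf c))%:R.
Proof.
rewrite /tpow /Phi3 /EPR.
under eq_bigr do rewrite -!natrM !mulnb.
rewrite prod_natb; congr (_ %:R); congr (nat_of_bool _).
apply/idP/idP => [/forallP H|/andP [/andP [/eqP h1 /eqP h2] /eqP h3]].
  apply/andP; split; [apply/andP; split|]; apply/eqP/ffunP => i; rewrite !ffunE;
  by case/andP: (H i) => /andP [/eqP h1 /eqP h2] /eqP h3.
apply/forallP => i.
move/ffunP: h1 => /(_ i); move/ffunP: h2 => /(_ i); move/ffunP: h3 => /(_ i).
by rewrite !ffunE => -> -> ->; rewrite !eqxx.
Qed.

Lemma dec_Phi3_MM (I : finType) : dec (tpow (Phi3 K) n) I <-> dec (@MM K #|F|) I.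
Proof.
split.
  apply: (dec_pull (f := fun x => zipf (enum_val x.2) (enum_val x.1))
                   (g := fun y => zipf (enum_val y.1) (enum_val y.2))
                   (h := fun z => zipf (enum_val z.1) (enum_val z.2))).
  move=> x y z /=.
  rewrite tpow_Phi3 !fstf_zip !sndf_zip /MM !(inj_eq enum_val_inj).
  by case: (x.1 == z.1); case: (x.2 == y.1).
apply: (dec_pull (f := fun a => (enum_rank (sndf a), enum_rank (fstf a)))
                 (g := fun b => (enum_rank (fstf b), enum_rank (sndf b)))
                 (h := fun c => (enum_rank (fstf c), enum_rank (sndf c)))).
move=> a b c /=.
rewrite tpow_Phi3 /MM /= !(inj_eq enum_rank_inj).
by case: (_ == _); case: (_ == _).
Qed.

End Phi.
Section Alg2.
Variable K : fieldType.

Lemma cardF n : #|{ffun 'I_n -> bool}| = (2 ^ n)%N.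
Proof. by rewrite card_ffun card_bool card_ord. Qed.

Lemma alg_mono N N' r : (N <= N')%N ->
  bilinear_mm_alg K N' r -> bilinear_mm_alg K N r.
Proof.
move=> HN /alg_dec D; apply/alg_dec.
pose w (x : ('I_N * 'I_N)%type) := (widen_ord HN x.1, widen_ord HN x.2).
apply: (dec_pull (f := w) (g := w) (h := w) _ D) => x y z.
have E : forall a b : 'I_N, (widen_ord HN a == widen_ord HN b) = (a == b).
  by move=> a b; apply/eqP/eqP => [/(congr1 val) /= /val_inj|->].
by rewrite /MM /= !E.
Qed.

Lemma alg_naive N : bilinear_mm_alg K N (N * N * N).
Proof.
have -> : (N * N * N)%N = #|{: (('I_N * 'I_N) * 'I_N)%type}| by rewrite !card_prod card_ord.
apply/alg_dec; apply: (dec_mono (I := (('I_N * 'I_N) * 'I_N)%type)); first by rewrite card_ord.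
exists (fun k x => (x == k.1)%:R), (fun k y => (y == (k.1.2, k.2))%:R),
       (fun k z => (z == (k.1.1, k.2))%:R).
move=> [a b] [c d] [i j].
rewrite (@sum_only _ _ ((a, b), d)); last first.
  move=> [[p q] t] Hk /=.
  have [/andP [/eqP Ep /eqP Eq]|Hn] := boolP ((a == p) && (b == q)).
    subst p q; rewrite !xpair_eqE.
    have Ht : (d == t) = false.
      by apply/negbTE; apply: contra Hk => /eqP ->.
    by rewrite Ht andbF mulr0 mul0r.
  by rewrite xpair_eqE (negbTE Hn) !mul0r.
rewrite /MM /= !xpair_eqE !eqxx /= [c == b]eq_sym [i == a]eq_sym [j == d]eq_sym.
by case: (a == i); case: (b == c); case: (d == j); rewrite /= ?mulr1 ?mulr0 ?mul0r ?mul1r.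
Qed.

Lemma alg_pos N r : (0 < N)%N -> bilinear_mm_alg K N r -> (0 < r)%N.
Proof.
move=> N0 /alg_dec; case: r => [|r] // [al [be [ga H]]].
pose o := Ordinal N0.
have := H (o, o) (o, o) (o, o); rewrite big_ord0 /MM /= ?eqxx /= => /eqP.
by rewrite oner_eq0.
Qed.

End Alg2.

Lemma slocc_alg (R : realType) m n :
  slocc (tpow (GHZ R) m) (tpow (Phi3 (complex R)) n) <->
  exists r, (r <= 2 ^ m)%N /\ bilinear_mm_alg (complex R) (2 ^ n) r.
Proof.
rewrite slocc_dec dec_Phi3_MM -(cardF n); split.
  move=> D; exists #|{ffun 'I_m -> bool}|; split; first by rewrite cardF.
  apply/alg_dec; apply: dec_mono D; by rewrite card_ord.
case=> r [Hr /alg_dec D]; apply: dec_mono D; by rewrite card_ord cardF.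
Qed.
Section Analysis.
Variable R : realType.

Lemma two_neq0 : (2 : R) != 0. Proof. by rewrite pnatr_eq0. Qed.

Lemma growth (d C : R) : 0 < d ->
  exists n0 : nat, forall n : nat, (n0 <= n)%N -> C <= 2 `^ (d * n%:R).
Proof.
move=> d0; have l2 : 0 < ln (2 : R) by apply: ln_gt0; rewrite ltr1n.
have dl : 0 < d * ln 2 by rewrite mulr_gt0.
exists (Num.truncn (C / (d * ln 2))).+1 => n Hn.
have h1 : C / (d * ln 2) < n%:R.
  apply: lt_le_trans (truncnS_gt _) _; by rewrite ler_nat.
rewrite ltr_pdivrMr // in h1.
rewrite /powR (negbTE two_neq0); apply: le_trans (expR_ge1Dx _).
have -> : d * n%:R * ln 2 = n%:R * (d * ln 2) by ring.
lra.
Qed.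

Lemma pow2 (k : nat) : ((2 ^ k)%N%:R : R) = 2 `^ k%:R.
Proof. by rewrite natrX powR_mulrn. Qed.

Lemma pow2' (k : nat) (x : R) : ((2 ^ k)%N%:R : R) `^ x = 2 `^ (x * k%:R).
Proof. by rewrite pow2 -powRrM mulrC. Qed.


Section Generic.
Variable P : nat -> nat -> Prop.
Hypothesis Pmono : forall N N' r, (N <= N')%N -> P N' r -> P N r.
Hypothesis Pnaive : forall N, P N (N * N * N)%N.
Hypothesis Ppos : forall N r, (0 < N)%N -> P N r -> (0 < r)%N.

Definition LS : set R := [set u : R | 0 <= u /\ exists n0 : nat, forall n : nat,
  (n0 <= n)%N -> exists r, (r <= 2 ^ Num.truncn (u * n%:R))%N /\ P (2 ^ n)%N r].
Definition OS : set R := [set tau : R | exists (c : R) (N0 : nat), forall N : nat,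
  (N0 <= N)%N -> exists r : nat, P N r /\ r%:R <= c * (N%:R `^ tau)].

Lemma lbOS tau : OS tau -> 0 <= tau.
Proof.
move=> [c [N0 H]]; rewrite leNgt; apply/negP => tneg.
have [n1 Hn1] := growth (d := - tau) (c + 1) (ltac:(by rewrite oppr_gt0)).
pose n := maxn N0 n1.
have hN : (N0 <= 2 ^ n)%N.
  apply: leq_trans (ltnW (ltn_expl n (ltnSn 1))); exact: leq_maxl.
have [r [Pr Hr]] := H _ hN.
have r0 := Ppos (expn_gt0 2 n) Pr.
have Hg := Hn1 n (leq_maxr _ _).
set y := 2 `^ (- tau * n%:R) in Hg.
have y0 : 0 < y by apply: powR_gt0.
have E : ((2 ^ n)%N%:R : R) `^ tau = y^-1.
  by rewrite pow2' /y -powRN mulNr opprK.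
rewrite E in Hr.
have r1 : (1 : R) <= r%:R by rewrite ler1n.
have : 1 <= c / y by apply: le_trans r1 Hr.
rewrite ler_pdivlMr // mul1r => Hy.
lra.
Qed.

Lemma OS3 : OS 3.
Proof.
exists 1, 0%N => N _; exists (N * N * N)%N; split; first exact: Pnaive.
rewrite mul1r powR_mulrn // -natrX ler_nat.
by rewrite !expnS expn0 muln1 mulnA.
Qed.

Lemma OSne : OS !=set0.
Proof. by exists 3; exact: OS3. Qed.

Lemma OS_lb : lbound OS 0.
Proof. by move=> x /lbOS. Qed.

Lemma LS_OS : LS `<=` OS.
Proof.
move=> u [u0 [n0 H]].
exists (2 `^ u), (2 ^ n0)%N => N HN.
have N0 : (0 < N)%N by apply: leq_trans HN; rewrite expn_gt0.
pose t := trunc_log 2 N.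
have h1 : (N < 2 ^ t.+1)%N by apply: trunc_log_ltn.
have h2 : (2 ^ t <= N)%N by apply: trunc_logP.
have hn : (n0 <= t.+1)%N.
  have : (2 ^ n0 < 2 ^ t.+1)%N by apply: leq_ltn_trans HN h1.
  by rewrite ltn_exp2l // => /ltnW.
have [r [Hr Pr]] := H _ hn.
exists r; split; first by apply: Pmono Pr; exact: ltnW.
apply: le_trans (_ : (2 ^ Num.truncn (u * t.+1%:R))%N%:R <= _).
  by rewrite ler_nat.
rewrite pow2.
apply: le_trans (_ : 2 `^ (u * t.+1%:R) <= _).
  by apply: ler_powR; [rewrite ler1n | rewrite truncn_le mulr_ge0].
rewrite -pow2' -powRM //.
apply: ge0_ler_powR => //; rewrite ?nnegrE // -natrM ler_nat.
by rewrite expnS leq_mul2l.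
Qed.

Lemma OS_LS u : inf OS < u -> LS u.
Proof.
move=> Hu.
have [tau Otau ltu] := inf_lt OSne Hu.
have u0 : 0 <= u.
  apply: le_trans (ltW Hu); apply: lb_le_inf OSne OS_lb.
case: Otau => c [N0 H].
have [n1 Hn1] := growth (d := u - tau) (2 * c) (ltac:(by rewrite subr_gt0)).
split => //; exists (maxn N0 n1) => n Hn.
have hN : (N0 <= 2 ^ n)%N.
  apply: leq_trans (ltnW (ltn_expl n (ltnSn 1))).
  by apply: leq_trans Hn; exact: leq_maxl.
have [r [Pr Hr]] := H _ hN.
exists r; split => //.
rewrite -(ler_nat R) pow2.
set k := Num.truncn (u * n%:R).
have hk : u * n%:R < k.+1%:R by apply: truncnS_gt.
have E1 : 2 `^ (u * n%:R) <= 2 * 2 `^ k%:R.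
  apply: le_trans (_ : 2 `^ (k.+1%:R) <= _).
    by apply: ler_powR; [rewrite ler1n | exact: ltW].
  by rewrite [k.+1%:R]mulrSr powRD ?two_neq0 ?implybT // powRr1 // mulrC.
have E2 : 2 `^ (u * n%:R) = 2 `^ (tau * n%:R) * 2 `^ ((u - tau) * n%:R).
  by rewrite -powRD ?two_neq0 ?implybT //; congr (_ `^ _); ring.
rewrite pow2' in Hr.
have Hg := Hn1 n (leq_trans (leq_maxr _ _) Hn).
have E3 : 2 * c * 2 `^ (tau * n%:R) <= 2 `^ ((u - tau) * n%:R) * 2 `^ (tau * n%:R).
  by apply: ler_wpM2r => //; apply: powR_ge0.
nra.
Qed.

Lemma LSne : LS !=set0.
Proof. exists (inf OS + 1); apply: OS_LS; lra. Qed.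

Lemma LS_lb : lbound LS 0.
Proof. by move=> x []. Qed.

Lemma generic_main : inf LS = inf OS.
Proof.
apply/eqP; rewrite eq_le; apply/andP; split.
  apply/ler_addgt0Pr => e e0.
  apply: (ge_inf (ex_intro _ 0 LS_lb)); apply: OS_LS; lra.
apply: lb_le_inf; first exact: LSne.
move=> u /LS_OS Ou.
exact: (ge_inf (ex_intro _ 0 OS_lb)).
Qed.

End Generic.
End Analysis.

Theorem theorem1 (R : realType) : lambda_GHZ R = omega_mm R.
Proof.
rewrite /lambda_GHZ /omega_mm.
have -> : @lambda_set R = @LS R (bilinear_mm_alg (complex R)).
  apply/seteqP; split => u [u0 [n0 H]]; split => //; exists n0 => n Hn.
    by apply/slocc_alg; apply: H.
  by apply/slocc_alg; apply: H.
have -> : @omega_set R = @OS R (bilinear_mm_alg (complex R)) by [].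
apply: generic_main.
- by move=> N N' r; apply: alg_mono.
- exact: alg_naive.
- by move=> N r; apply: alg_pos.
Qed.
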